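(* For every integer $n\ge 1$, $$\Phi^{(3)}[a, a'; bq^n, b'; c; x, y] = \Phi^{(3)}[a, a'; b, b'; c; x, y] + \frac{bx(1-a)}{1-c} \sum_{k=1}^n q^{k-1} \Phi^{(3)}[aq, a'; bq^k, b'; cq; x, y]$$ and $$\Phi^{(3)}[a, a'; bq^{-n}, b'; c; x, y] = \Phi^{(3)}[a, a'; b, b'; c; x, y] - \frac{bx(1-a)}{1-c} \sum_{k=1}^n q^{-k} \Phi^{(3)}[aq, a'; bq^{1-k}, b'; cq; x, y].$$
   Context: Let $q$ be a complex number with $0<|q|<1$. For complex $z$ and integer $m\ge 0$, $(z;q)_m=\prod_{j=0}^{m-1}(1-zq^j)$, with $(z;q)_0=1$. The $q$-Appell function $\Phi^{(3)}$ (which has a single denominator parameter $c$) is $$\Phi^{(3)}[a, a'; b, b'; c; x, y] = \sum_{m, n \geq 0} \frac{(a; q)_m (a'; q)_n (b; q)_m (b'; q)_n}{(q; q)_m (q; q)_n (c; q)_{m+n}} x^m y^n.$$ Identities are understood as identities of power series in $x,y$ (formal, or convergent for small $|x|,|y|$), with complex parameters chosen so that no denominator occurring vanishes. *)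

(* Defs.v *)
From HB Require Import structures.
From mathcomp Require Import all_boot all_order all_algebra.
From mathcomp Require Import reals.
From mathcomp Require Export complex.
Set Implicit Arguments. Unset Strict Implicit. Unset Printing Implicit Defensive.
Import Order.TTheory GRing.Theory Num.Theory.
Local Open Scope ring_scope.

Definition qpoch {F : fieldType} (z q : F) (m : nat) : F :=
  \prod_(j < m) (1 - z * q ^+ j).

(* Formal power series in two variables x, y: coefficient of x^m y^n. *)
Definition fps2 (F : Type) := nat -> nat -> F.

Definition fps2_add {F : fieldType} (f g : fps2 F) : fps2 F :=
  fun m n => f m n + g m n.
Definition fps2_sub {F : fieldType} (f g : fps2 F) : fps2 F :=
  fun m n => f m n - g m n.
Definition fps2_scale {F : fieldType} (c : F) (f : fps2 F) : fps2 F :=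
  fun m n => c * f m n.
Definition fps2_mulx {F : fieldType} (f : fps2 F) : fps2 F :=
  fun m n => if m is m'.+1 then f m' n else 0.
Definition fps2_sum {F : fieldType} (lo hi : nat) (G : nat -> fps2 F) : fps2 F :=
  fun m n => \sum_(lo <= k < hi) G k m n.

Definition Phi3 {F : fieldType} (q a a' b b' c : F) : fps2 F :=
  fun m n => qpoch a q m * qpoch a' q n * qpoch b q m * qpoch b' q n
             / (qpoch q q m * qpoch q q n * qpoch c q (m + n)).

(* Main.v *)
Require Import Defs.
From HB Require Import structures.
From mathcomp Require Import all_boot all_order all_algebra.
From mathcomp Require Import reals complex.
From mathcomp Require Import ring.
From Stdlib Require Import FunctionalExtensionality.
Import Order.TTheory GRing.Theory Num.Theory.
Local Open Scope ring_scope.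

Section Aux.
Variable F : fieldType.

Lemma qpoch0 (z q : F) : qpoch z q 0 = 1.
Proof. by rewrite /qpoch big_ord0. Qed.

Lemma qpoch_recr (z q : F) m : qpoch z q m.+1 = qpoch z q m * (1 - z * q ^+ m).
Proof. by rewrite /qpoch big_ord_recr. Qed.

Lemma qpoch_recl (z q : F) m : qpoch z q m.+1 = (1 - z) * qpoch (z * q) q m.
Proof.
rewrite /qpoch big_ord_recl expr0 mulr1; congr (_ * _).
by apply: eq_bigr => i _; rewrite /= exprS mulrA.
Qed.

Lemma qpoch_neq0 (z q : F) m : (forall j, z * q ^+ j != 1) -> qpoch z q m != 0.
Proof.
move=> h; rewrite /qpoch; apply/prodf_neq0 => j _.
by rewrite subr_eq0 eq_sym.
Qed.

Lemma step (q a a' b' c beta : F) m p :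
  (forall j, q * q ^+ j != 1) -> (forall j, c * q ^+ j != 1) ->
  Phi3 q a a' (beta * q) b' c m.+1 p =
  Phi3 q a a' beta b' c m.+1 p
  + beta * (1 - a) / (1 - c) * Phi3 q (a * q) a' (beta * q) b' (c * q) m p.
Proof.
move=> hq hc.
have hcq : forall j, c * q * q ^+ j != 1 by move=> j; rewrite -mulrA -exprS.
have h1 : 1 - q * q ^+ m != 0 by rewrite subr_eq0 eq_sym.
have h2 : 1 - c != 0 by have := hc 0%N; rewrite expr0 mulr1 subr_eq0 eq_sym.
have h3 := qpoch_neq0 q q m hq.
have h4 := qpoch_neq0 q q p hq.
have h5 := qpoch_neq0 (c * q) q (m + p) hcq.
rewrite /Phi3 addSn (qpoch_recr (beta * q)) (qpoch_recl beta) (qpoch_recl a) (qpoch_recl c).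
rewrite (qpoch_recr q q m).
move: h1 h2 h3 h4 h5.
set A := qpoch (a * q) q m. set A' := qpoch a' q p. set P := qpoch (beta * q) q m.
set B := qpoch b' q p. set Q := qpoch q q m. set Qn := qpoch q q p.
set C := qpoch (c * q) q (m + p).
move=> h1 h2 h3 h4 h5.
field.
by rewrite h1 h2 h3 h4 h5.
Qed.

End Aux.

Theorem theorem11 (R : realType) (q a a' b b' c : R[i]) (n : nat)
  (hq0 : 0 < `|q|) (hq1 : `|q| < 1)
  (hc : forall j : nat, c * q ^+ j != 1)
  (hn : (1 <= n)%N) :
  Phi3 q a a' (b * q ^+ n) b' c =
    fps2_add (Phi3 q a a' b b' c)
      (fps2_scale (b * (1 - a) / (1 - c))
         (fps2_mulx (fps2_sum 1 n.+1
            (fun k => fps2_scale (q ^+ (k - 1)) (Phi3 q (a * q) a' (b * q ^+ k) b' (c * q))))))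
  /\
  Phi3 q a a' (b * q ^- n) b' c =
    fps2_sub (Phi3 q a a' b b' c)
      (fps2_scale (b * (1 - a) / (1 - c))
         (fps2_mulx (fps2_sum 1 n.+1
            (fun k => fps2_scale (q ^- k) (Phi3 q (a * q) a' (b * q / q ^+ k) b' (c * q)))))).
Proof.
have hq : forall j, q * q ^+ j != 1.
  move=> j; apply/negP => /eqP h.
  have := congr1 (fun z => `|z|) h; rewrite -exprS normrX normr1 => e.
  have := exprn_ilt1 j.+1 (normr_ge0 q) hq1; rewrite e ltxx //.
have qn0 : q != 0 by rewrite -normr_gt0.
have m0 : forall z p, Phi3 q a a' z b' c 0 p = Phi3 q a a' b b' c 0 p.
  by move=> z p; rewrite /Phi3 !qpoch0.
split; apply: functional_extensionality => m; apply: functional_extensionality => p;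
  rewrite /fps2_add /fps2_sub /fps2_scale /fps2_mulx /fps2_sum.
- case: m => [|m]; first by rewrite m0 mulr0 addr0.
  elim: (n) => [|k IH]; first by rewrite big_geq // mulr0 addr0 expr0 mulr1.
  rewrite big_nat_recr //= exprSr mulrA step // IH subn1 /=.
  ring.
- case: m => [|m]; first by rewrite m0 mulr0 subr0.
  elim: (n) => [|k IH]; first by rewrite big_geq // mulr0 subr0 expr0 invr1 mulr1.
  have e : b * q / q ^+ k.+1 = b / q ^+ k.
    rewrite exprS; field; by rewrite qn0 expf_neq0.
  have e2 : b / q ^+ k.+1 * q = b / q ^+ k.
    rewrite exprS; field; by rewrite qn0 expf_neq0.
  have st := @step _ q a a' b' c (b / q ^+ k.+1) m p hq hc.
  rewrite e2 IH in st.
  rewrite big_nat_recr //= e.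
  have -> : Phi3 q a a' (b / q ^+ k.+1) b' c m.+1 p =
     Phi3 q a a' b b' c m.+1 p -
     b * (1 - a) / (1 - c) *
     \sum_(1 <= i < k.+1) q ^- i * Phi3 q (a * q) a' (b * q / q ^+ i) b' (c * q) m p -
     b / q ^+ k.+1 * (1 - a) / (1 - c) * Phi3 q (a * q) a' (b / q ^+ k) b' (c * q) m p.
    by rewrite st; ring.
  ring.
Qed.
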